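(* \[\sum_{\pi\in\mathcal{C}_1}q^{|\pi|}=\sum_{m\ge0}\frac{q^{\binom{m+1}{2}}}{(q;q)_m}\sum_{j\ge0}q^{\binom{j+1}{2}}{m\brack j}.\]
   Context: An overpartition is a partition in which the first occurrence of each part size may be overlined, with parts listed in non-increasing order with respect to $1<\bar1<2<\bar2<\cdots$. A part is of size $t$ if it is $t$ or $\bar t$, and $|\pi|$ is the sum of the sizes of the parts. $\mathcal{C}_1$ is the set of overpartitions $(\pi_1,\dots,\pi_\ell)$, including the empty one, such that: - for each $1\le i<\ell$, the size of $\pi_i$ minus the size of $\pi_{i+1}$ is at least $1$, and at least $2$ if $\pi_i$ is non-overlined; - no part equals the non-overlined part $1$ (the part $\bar1$ is allowed). $(q;q)_n=\prod_{i=1}^n(1-q^i)$. The Gaussian binomial is ${M\brack N}=\frac{(q;q)_M}{(q;q)_N(q;q)_{M-N}}$ for $0\le N\le M$ and $0$ otherwise. *)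

(* Defs.v *)
From mathcomp Require Import all_boot all_algebra.
Set Implicit Arguments. Unset Strict Implicit. Unset Printing Implicit Defensive.
Import GRing.Theory Num.Theory.
Local Open Scope ring_scope.

Definition fps := nat -> rat.

Definition fmul (f g : fps) : fps :=
  fun n => \sum_(i < n.+1) f i * g (n - i)%N.

(* first n+1 coefficients of the multiplicative inverse of f (f 0 <> 0):
   g 0 = 1/f 0,  g n = -(1/f 0) * sum_{i=1}^{n} f i * g (n-i) *)
Fixpoint invl (f : fps) (n : nat) : seq rat :=
  match n with
  | 0 => [:: (f 0%N)^-1]
  | n'.+1 => let s := invl f n' in
      rcons s (- (f 0%N)^-1 * \sum_(i < n'.+1) f i.+1 * nth 0 s (n' - i)%N)
  end.

Definition finv (f : fps) : fps := fun n => nth 0 (invl f n) n.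

Definition fps_of_poly (p : {poly rat}) : fps := fun n => p`_n.

Definition qmono (k : nat) : fps := fun n => if n == k then 1 else 0.

Definition qpoch (n : nat) : fps :=
  fps_of_poly (\prod_(i < n) (1 - 'X^(i.+1) : {poly rat})).

Definition gauss (M N : nat) : fps :=
  if (N <= M)%N then fmul (qpoch M) (finv (fmul (qpoch N) (qpoch (M - N))))
  else fun _ => 0.

(* sum_{j >= 0} q^{binom(j+1,2)} [m brack j]  (terms with j > m vanish) *)
Definition inner_sum (m : nat) : fps :=
  fun k => \sum_(j < m.+1) fmul (qmono 'C(j.+1, 2)) (gauss m j) k.

Definition rhs_term (m : nat) : fps :=
  fmul (qmono 'C(m.+1, 2)) (fmul (finv (qpoch m)) (inner_sum m)).

(* coefficient of q^n of sum_{m >= 0} rhs_term m; terms with m > n have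
   order binom(m+1,2) >= m > n, so only m <= n contribute *)
Definition rhs_coef (n : nat) : rat := \sum_(m < n.+1) rhs_term m n.

(* A part is a pair (t, b): size t, overlined iff b. *)
Definition part := (nat * bool)%type.

(* position in the order 1 < 1bar < 2 < 2bar < ... *)
Definition pkey (x : part) : nat := (2 * x.1 + x.2)%N.

(* consecutive parts: non-increasing, and an overlined part t-bar occurs
   at most once (only the first occurrence of a size may be overlined) *)
Definition orel (x y : part) : bool :=
  (pkey y < pkey x)%N || ((x == y) && ~~ x.2).

Definition is_overpartition (pi : seq part) : bool :=
  all (fun x : part => (0 < x.1)%N) pi && sorted orel pi.

Definition weight (pi : seq part) : nat := sumn (map (fun x : part => x.1) pi).

Definition c1rel (x y : part) : bool :=
  (y.1 + (if x.2 then 1 else 2) <= x.1)%N.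

Definition inC1 (pi : seq part) : bool :=
  [&& is_overpartition pi, sorted c1rel pi & (1%N, false) \notin pi].

(* Main.v *)
Require Import Defs.
From mathcomp Require Import all_boot all_algebra.
From mathcomp Require Import zify ring.
From Stdlib Require Import FunctionalExtensionality.
Require Import Defs.
Set Implicit Arguments. Unset Strict Implicit. Unset Printing Implicit Defensive.
Import GRing.Theory Num.Theory.

Definition addp k (x : part) : part := ((x.1 + k)%N, x.2).
Definition shift k (t : seq part) := map (addp k) t.
Definition subp k (x : part) : part := ((x.1 - k)%N, x.2).
Definition unshift k (t : seq part) := map (subp k) t.
Definition rc (y x : part) : bool := c1rel x y.
Definition ok (r : seq part) := path rc (0%N, false) r.

Lemma rc_shift k y x : rc (addp k y) (addp k x) = rc y x.
Proof. by rewrite /rc /c1rel /addp /= addnAC leq_add2r. Qed.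

Lemma path_shift k z t : path rc (addp k z) (shift k t) = path rc z t.
Proof. by elim: t z => //= y t IH z; rewrite rc_shift IH. Qed.

Lemma path_head z z' t : z.1 = z'.1 -> path rc z t = path rc z' t.
Proof. by case: t => //= y t; rewrite /rc /c1rel => ->. Qed.

Lemma path_gt z t : path rc z t -> all (fun y : part => z.1 < y.1)%N t.
Proof.
elim: t z => //= y t IH z /andP [h1 h2].
have hz : (z.1 < y.1)%N by move: h1; rewrite /rc /c1rel; case: (y.2) => /=; lia.
rewrite hz /=; apply: (sub_all _ (IH _ h2)) => w /= hw; exact: ltn_trans hz hw.
Qed.

Lemma shiftK k t : all (fun y : part => k <= y.1)%N t -> shift k (unshift k t) = t.
Proof.
elim: t => //= y t IH /andP [h1 h2]; rewrite IH //.
by case: y h1 => a b /= h1; rewrite /addp /subp /= subnK.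
Qed.

Lemma unshiftK k : cancel (shift k) (unshift k).
Proof. by apply: mapK => -[a b]; rewrite /addp /subp /= addnK. Qed.

Lemma shift_inj k : injective (shift k).
Proof. exact: can_inj (unshiftK k). Qed.

Lemma weight_cons x t : weight (x :: t) = (x.1 + weight t)%N.
Proof. by []. Qed.

Lemma weight_shift k t : weight (shift k t) = (weight t + k * size t)%N.
Proof.
elim: t => [|y t IH]; first by rewrite /= muln0.
rewrite /shift /= !weight_cons -/(shift k t) IH /addp /=; lia.
Qed.

Lemma size_shift k t : size (shift k t) = size t.
Proof. exact: size_map. Qed.

Lemma ok_shift1 t : ok t -> ok (shift 1 t).
Proof.
case: t => // -[a b] t; rewrite /ok /shift /= => /andP [h1 h2].
rewrite -/(shift 1 t) (path_shift 1 (a, b)) h2 andbT; move: h1; rewrite /rc /c1rel /addp /=.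
by case: (b) => /=; lia.
Qed.

Lemma ok_cons1 t : ok t -> ok ((1%N, true) :: shift 1 t).
Proof.
move=> h; rewrite /ok /=; change (1%N, true) with (addp 1 (0%N, true)).
by rewrite path_shift (path_head _ (z' := (0%N, false))).
Qed.

Lemma ok_cons2 t : ok t -> ok ((2%N, false) :: shift 2 t).
Proof.
move=> h; rewrite /ok /=; change (2%N, false) with (addp 2 (0%N, false)).
by rewrite path_shift.
Qed.

Lemma dec1 r : ok ((1%N, true) :: r) -> r = shift 1 (unshift 1 r) /\ ok (unshift 1 r).
Proof.
rewrite /ok /= => h.
have ha : all (fun y : part => 1 <= y.1)%N r.
  by apply: (sub_all _ (path_gt h)) => w /= /ltnW.
rewrite shiftK //; split => //.
rewrite (path_head _ (z' := (0%N, true))) // -(path_shift 1) shiftK //.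
Qed.

Lemma dec2 r : ok ((2%N, false) :: r) -> r = shift 2 (unshift 2 r) /\ ok (unshift 2 r).
Proof.
rewrite /ok /= => h.
have ha : all (fun y : part => 2 <= y.1)%N r.
  by apply: (sub_all _ (path_gt h)) => w /= /ltnW.
rewrite shiftK //; split => //.
rewrite -(path_shift 2) shiftK //.
Qed.

Lemma dec3 x r : ok (x :: r) -> x != (1%N, true) -> x != (2%N, false) ->
  x :: r = shift 1 (unshift 1 (x :: r)) /\ ok (unshift 1 (x :: r)).
Proof.
case: x => a b; rewrite /ok /= => /andP [h1 h2] n1 n2.
have hc : (2 <= a /\ (if b then 1 else 2) < a)%N.
  move: h1 n1 n2; rewrite /rc /c1rel /=.
  case: b h2 => /= _ h1 n1 n2.
    have : a != 1%N by apply: contraNneq n1 => ->.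
    lia.
  have : a != 2%N by apply: contraNneq n2 => ->.
  lia.
have ha : all (fun y : part => 1 <= y.1)%N r.
  by apply: (sub_all _ (path_gt h2)) => w /= hw; lia.
rewrite shiftK //=.
rewrite {1}/addp /subp /= subnK; last by lia.
split => //.
apply/andP; split.
  by rewrite /rc /c1rel /=; move: hc; case: (b) => /=; lia.
have e : (a, b) = addp 1 (subp 1 (a, b)) by rewrite /addp /subp /= subnK //; lia.
by rewrite -(path_shift 1) shiftK // -e.
Qed.

Definition g1 (t : seq part) : seq part := (1%N, true) :: shift 1 t.
Definition g2 (t : seq part) : seq part := (2%N, false) :: shift 2 t.

Fixpoint R (fuel n m : nat) {struct fuel} : seq (seq part) :=
  match fuel with
  | 0 => [::]
  | f.+1 =>
    match m with
    | 0 => if n == 0%N then [:: [::]] else [::]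
    | m'.+1 =>
      (if (m'.+1 <= n)%N then map (shift 1) (R f (n - m'.+1) m'.+1)
                              ++ map g1 (R f (n - m'.+1) m')
       else [::])
      ++ (if (2 * m'.+1 <= n)%N then map g2 (R f (n - 2 * m'.+1) m') else [::])
    end
  end.

Definition spec (n m : nat) (r : seq part) := [&& ok r, weight r == n & size r == m].
Definition hd (r : seq part) := head (0%N, false) r.

Lemma uniq_cat_disj (T : eqType) (s1 s2 : seq T) : uniq s1 -> uniq s2 ->
  (forall x, x \in s1 -> x \in s2 -> False) -> uniq (s1 ++ s2).
Proof.
move=> u1 u2 H; rewrite cat_uniq u1 u2 andbT /=; apply/hasPn => x hx.
by apply/negP => hx1; exact: H x hx1 hx.
Qed.

Lemma ok_size_weight r : ok r -> (size r <= weight r)%N.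
Proof.
move/path_gt; elim: r => //= x r IH /andP [h1 h2].
rewrite weight_cons; have := IH h2; lia.
Qed.

Lemma g1_inj : injective g1.
Proof. by move=> t u [] /shift_inj. Qed.
Lemma g2_inj : injective g2.
Proof. by move=> t u [] /shift_inj. Qed.

Lemma memA_char n m L : (m.+1 <= n)%N ->
  (forall t, (t \in L) = spec (n - m.+1) m.+1 t) ->
  forall r, (r \in map (shift 1) L) =
     [&& spec n m.+1 r, hd r != (1%N, true) & hd r != (2%N, false)].
Proof.
move=> c hL r; apply/idP/idP.
  case/mapP => t; rewrite hL => /and3P [h1 /eqP h2 /eqP h3] ->.
  apply/and3P; split.
  - apply/and3P; split; first exact: ok_shift1.
      by rewrite weight_shift h2 h3; apply/eqP; lia.
    by rewrite size_shift h3.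
  - case: t h1 h2 h3 => // -[a b] t; rewrite /ok /= => /andP [h _] _ _.
    apply/negP => /eqP [e1 e2]; move: h; rewrite /rc /c1rel /= e2; lia.
  - case: t h1 h2 h3 => // -[a b] t; rewrite /ok /= => /andP [h _] _ _.
    apply/negP => /eqP [e1 e2]; move: h; rewrite /rc /c1rel /= e2; lia.
case/and3P => /and3P [h1 /eqP h2 /eqP h3] n1 n2.
case: r h1 h2 h3 n1 n2 => // x r h1 h2 h3 n1 n2.
have [e ht] := dec3 h1 n1 n2.
move: (unshift 1 (x :: r)) e ht => t e ht; rewrite e in h2 h3 *.
apply: map_f; rewrite hL; apply/and3P; split => //.
  apply/eqP; move: h2 h3; rewrite weight_shift size_shift; lia.
by move: h3; rewrite size_shift => ->.
Qed.

Lemma memB_char n m L : (m.+1 <= n)%N ->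
  (forall t, (t \in L) = spec (n - m.+1) m t) ->
  forall r, (r \in map g1 L) = spec n m.+1 r && (hd r == (1%N, true)).
Proof.
move=> c hL r; apply/idP/idP.
  case/mapP => t; rewrite hL => /and3P [h1 /eqP h2 /eqP h3] ->.
  rewrite /hd /= eqxx andbT; apply/and3P; split; first exact: ok_cons1.
    by rewrite /g1 weight_cons weight_shift h2 h3 /=; apply/eqP; lia.
  by rewrite /= size_shift h3.
case/andP => /and3P [h1 /eqP h2 /eqP h3] /eqP.
case: r h1 h2 h3 => // x r h1 h2 h3 /= ex; subst x.
have [e ht] := dec1 h1.
move: (unshift 1 r) e ht => t e ht; rewrite e in h2 h3 *.
apply: (map_f g1); rewrite hL; apply/and3P; split => //.
  apply/eqP; move: h2 h3; rewrite weight_cons weight_shift /= size_shift; lia.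
by move: h3; rewrite /= size_shift => /eqP; rewrite eqSS.
Qed.

Lemma memC_char n m (c : bool) L : (c -> 2 * m.+1 <= n)%N -> (~~ c -> n < 2 * m.+1)%N ->
  (c -> forall t, (t \in L) = spec (n - 2 * m.+1) m t) ->
  forall r, (r \in (if c then map g2 L else [::])) = spec n m.+1 r && (hd r == (2%N, false)).
Proof.
move=> c1 c2 hL r; apply/idP/idP.
  case: c c1 c2 hL => // c1 _ hL.
  case/mapP => t; rewrite hL // => /and3P [h1 /eqP h2 /eqP h3] ->.
  have c := c1 isT.
  rewrite /hd /= eqxx andbT; apply/and3P; split; first exact: ok_cons2.
    by rewrite /g2 weight_cons weight_shift h2 h3 /=; apply/eqP; lia.
  by rewrite /= size_shift h3.
case/andP => /and3P [h1 /eqP h2 /eqP h3] /eqP.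
case: r h1 h2 h3 => // x r h1 h2 h3 /= ex; subst x.
have [e ht] := dec2 h1.
move: (unshift 2 r) e ht => t e ht; rewrite e in h2 h3 *.
case: c c1 c2 hL => c1 c2 hL.
  apply: (map_f g2); rewrite hL //; apply/and3P; split => //.
    apply/eqP; move: h2 h3 (c1 isT); rewrite weight_cons weight_shift /= size_shift; lia.
  by move: h3; rewrite /= size_shift => /eqP; rewrite eqSS.
have := c2 isT; move: h2 h3; rewrite weight_cons weight_shift /= size_shift; lia.
Qed.

Lemma R_spec f : forall n m, (n < f)%N ->
  uniq (R f n m) /\ forall r, (r \in R f n m) = spec n m r.
Proof.
elim: f => [//|f IH] n [|m] hn /=.
  case: eqP => [->|hn0]; split => // r.
    rewrite inE /spec; case: r => [|x r]; first by rewrite !eqxx.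
    by rewrite !andbF.
  rewrite in_nil /spec; case: r => [|x r] /=; last by rewrite !andbF.
  by case: n hn hn0.
have hC : forall r, (r \in (if (2 * m.+1 <= n)%N then map g2 (R f (n - 2 * m.+1) m) else [::]))
     = spec n m.+1 r && (hd r == (2%N, false)).
  apply: memC_char => [h|h|h t]; try lia.
  by case: (IH (n - 2 * m.+1) m) => //; lia.
have uC : uniq (if (2 * m.+1 <= n)%N then map g2 (R f (n - 2 * m.+1) m) else [::]).
  case: ifP => // h; rewrite map_inj_uniq; last exact: g2_inj.
  by case: (IH (n - 2 * m.+1) m) => //; lia.
case: (leqP m.+1 n) => c1; last first.
  have -> : (2 * m.+1 <= n)%N = false by apply/negbTE; rewrite -ltnNge; lia.
  split => // r; rewrite in_nil /spec; apply/esym/negbTE.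
  apply/negP => /and3P [h1 /eqP h2 /eqP h3]; have := ok_size_weight h1; lia.
have [uA hA] : uniq (R f (n - m.+1) m.+1) /\ forall r, (r \in R f (n - m.+1) m.+1) = spec (n - m.+1) m.+1 r.
  by apply: IH; lia.
have [uB hB] : uniq (R f (n - m.+1) m) /\ forall r, (r \in R f (n - m.+1) m) = spec (n - m.+1) m r.
  by apply: IH; lia.
have mA := memA_char c1 hA.
have mB := memB_char c1 hB.
split.
  apply: uniq_cat_disj => //.
    apply: uniq_cat_disj.
    - by rewrite map_inj_uniq //; exact: shift_inj.
    - by rewrite map_inj_uniq //; exact: g1_inj.
    - move=> x; rewrite mA mB => /and3P [_ n1 _] /andP [_ e]; by rewrite e in n1.
  move=> x; rewrite mem_cat mA mB hC => /orP [/and3P [_ _ n2] | /andP [_ e1]] /andP [_ e].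
    by rewrite e in n2.
  by rewrite (eqP e) in e1.
move=> r; rewrite !mem_cat mA mB hC.
case: (spec n m.+1 r) => //=.
by case: eqP; case: eqP.
Qed.

Lemma sorted_rcons2 (T : Type) (e : rel T) s x z :
  sorted e (rcons (rcons s x) z) = sorted e (rcons s x) && e x z.
Proof.
case: s => [|a s] /=; first by rewrite andbT.
by rewrite rcons_path last_rcons.
Qed.

Lemma path_rev z pi : path rc z (rev pi) = sorted c1rel (rcons pi z).
Proof.
elim/last_ind: pi z => [|s x IH] z //.
by rewrite rev_rcons /= IH sorted_rcons2 andbC.
Qed.

Lemma inC1_cons2 x y l : inC1 (x :: y :: l) = c1rel x y && inC1 (y :: l).
Proof.
case h: (c1rel x y); last by rewrite /inC1 /= h !andbF.
have [hx [ho hne]] : [/\ (0 < x.1)%N, orel x y & (1%N, false) != x].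
  case: x y h => a b [c d]; rewrite /c1rel /orel /pkey /=.
  case: b; case: d => /= h; split; try lia; rewrite ?ltn_add2r; try (apply/orP; left; lia);
    apply/negP => /eqP [ea]; lia.
rewrite /inC1 /is_overpartition /= hx ho h !inE negb_or hne /=.
by [].
Qed.

Lemma inC1E pi : inC1 pi = sorted c1rel (rcons pi (0%N, false)).
Proof.
elim: pi => [|x pi IH]; first by [].
case: pi IH => [|y pi] IH.
  case: x => a [] /=; rewrite /inC1 /is_overpartition /c1rel /= !inE /=;
    case: a => [|[|a]] //.
by rewrite inC1_cons2 IH.
Qed.

Lemma ok_rev pi : ok (rev pi) = inC1 pi.
Proof. by rewrite /ok path_rev inC1E. Qed.

Definition cnt n m := size (R n.+1 n m).

Lemma R_size f n m : (n < f)%N -> size (R f n m) = cnt n m.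
Proof.
move=> h; have [u1 h1] := R_spec m h; have [u2 h2] := R_spec m (ltnSn n).
apply: perm_size; apply: uniq_perm => // r; by rewrite h1 h2.
Qed.

Lemma cnt0 n : cnt n 0 = (n == 0%N) :> nat.
Proof. by rewrite /cnt /=; case: (n == 0%N). Qed.

Lemma cntS n m : cnt n m.+1 =
  ((if (m.+1 <= n)%N then cnt (n - m.+1) m.+1 + cnt (n - m.+1) m else 0)
   + (if (2 * m.+1 <= n)%N then cnt (n - 2 * m.+1) m else 0))%N.
Proof.
rewrite /cnt /= size_cat; congr (_ + _)%N.
  case: ifP => h //; rewrite size_cat !size_map !R_size //; lia.
case: ifP => h //; rewrite !size_map !R_size //; lia.
Qed.


Local Open Scope ring_scope.

Definition ag (k : nat) (f : fps) (p : {poly rat}) :=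
  forall i, (i <= k)%N -> f i = p`_i.

Lemma fmul_ag k f g p r : ag k f p -> ag k g r -> ag k (fmul f g) (p * r).
Proof.
move=> Hf Hg i hi; rewrite /fmul coefM; apply: eq_bigr => j _.
have hj : (j <= k)%N by apply: leq_trans hi; rewrite -ltnS.
rewrite Hf // Hg //; apply: leq_trans hi; exact: leq_subr.
Qed.

Definition tr k (f : fps) : {poly rat} := \poly_(i < k.+1) f i.

Lemma tr_ag k f : ag k f (tr k f).
Proof. by move=> i hi; rewrite coef_poly ltnS hi. Qed.
Arguments tr_ag : clear implicits.

Lemma fps_ag k p : ag k (fps_of_poly p) p.
Proof. by []. Qed.
Arguments fps_ag : clear implicits.

Lemma fmulC f g : fmul f g = fmul g f.
Proof.
apply: functional_extensionality => n.
by rewrite (fmul_ag (tr_ag n f) (tr_ag n g)) // (fmul_ag (tr_ag n g) (tr_ag n f)) // mulrC.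
Qed.

Lemma fmulA f g h : fmul (fmul f g) h = fmul f (fmul g h).
Proof.
apply: functional_extensionality => n.
rewrite (fmul_ag (fmul_ag (tr_ag n f) (tr_ag n g)) (tr_ag n h)) //.
by rewrite (fmul_ag (tr_ag n f) (fmul_ag (tr_ag n g) (tr_ag n h))) // mulrA.
Qed.

Lemma fmul_poly p r : fmul (fps_of_poly p) (fps_of_poly r) = fps_of_poly (p * r).
Proof.
apply: functional_extensionality => n.
by rewrite (fmul_ag (fps_ag n p) (fps_ag n r)).
Qed.

Lemma qmonoE k : qmono k = fps_of_poly 'X^k.
Proof.
apply: functional_extensionality => n.
by rewrite /qmono /fps_of_poly coefXn; case: eqP.
Qed.

Lemma fmul1 f : fmul (qmono 0) f = f.
Proof.
apply: functional_extensionality => n.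
rewrite qmonoE (fmul_ag (fps_ag n 'X^0) (tr_ag n f)) //.
by rewrite expr0 mul1r -tr_ag.
Qed.

Lemma size_invl f n : size (invl f n) = n.+1.
Proof. by elim: n => //= n IH; rewrite size_rcons IH. Qed.

Lemma invl_prefix f n m i : (i <= n)%N ->
  nth 0 (invl f (n + m)) i = nth 0 (invl f n) i.
Proof.
move=> hi; elim: m => [|m IH]; first by rewrite addn0.
by rewrite addnS /= nth_rcons size_invl ltnS (leq_trans hi (leq_addr _ _)) IH.
Qed.

Lemma finvE f n i : (i <= n)%N -> finv f i = nth 0 (invl f n) i.
Proof. by move=> hi; rewrite -(subnKC hi) invl_prefix. Qed.

Lemma finvS f n :
  finv f n.+1 = - (f 0%N)^-1 * \sum_(i < n.+1) f i.+1 * finv f (n - i)%N.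
Proof.
rewrite /finv /= nth_rcons size_invl ltnn eqxx; congr (_ * _).
by apply: eq_bigr => i _; rewrite -(finvE f (leq_subr i n)).
Qed.

Lemma fmul_finv f : f 0%N != 0 -> fmul f (finv f) = qmono 0.
Proof.
move=> hf; apply: functional_extensionality => [[|n]].
  by rewrite /fmul big_ord1 /finv /= mulfV.
rewrite /fmul big_ord_recl subn0 finvS mulrA mulrN mulfV // mulN1r.
rewrite /qmono /=.
have -> : \sum_(i < n.+1) f (lift ord0 i) * finv f (n.+1 - lift ord0 i)%N
        = \sum_(i < n.+1) f i.+1 * finv f (n - i)%N.
  by apply: eq_bigr => i _; rewrite lift0 subSS.
by rewrite addNr.
Qed.

Lemma finv_uniq f g h : f 0%N != 0 -> fmul f h = g -> h = fmul (finv f) g.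
Proof.
move=> hf <-; rewrite -fmulA (fmulC (finv f)) fmul_finv //; by rewrite fmul1.
Qed.

Definition P (n : nat) : {poly rat} := \prod_(i < n) (1 - 'X^(i.+1)).
Definition E (n : nat) : {poly rat} := \prod_(i < n) (1 + 'X^(i.+1)).

Lemma PS n : P n.+1 = P n * (1 - 'X^(n.+1)).
Proof. by rewrite /P big_ord_recr. Qed.
Lemma ES n : E n.+1 = E n * (1 + 'X^(n.+1)).
Proof. by rewrite /E big_ord_recr. Qed.
Lemma P0 : P 0 = 1. Proof. by rewrite /P big_ord0. Qed.
Lemma E0 : E 0 = 1. Proof. by rewrite /E big_ord0. Qed.

Lemma P_coef0 n : (P n)`_0 = 1.
Proof.
elim: n => [|n IH]; first by rewrite P0 coefC.
by rewrite PS coef0M IH coefB coef1 coefXn mul1r subr0.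
Qed.

Fixpoint G (m j : nat) : {poly rat} :=
  match m, j with
  | 0, 0 => 1
  | 0, _.+1 => 0
  | _.+1, 0 => 1
  | m'.+1, j'.+1 => 'X^(m' - j') * G m' j' + G m' j'.+1
  end.

Lemma G_gt m j : (m < j)%N -> G m j = 0.
Proof.
elim: m j => [|m IH] [|j] //= h.
by rewrite !IH ?mulr0 ?addr0 // ltnW.
Qed.

Lemma G_prod m j : (j <= m)%N -> G m j * P j * P (m - j) = P m.
Proof.
elim: m j => [|m IH] [|j] //= h.
- by rewrite P0 !mul1r.
- by rewrite P0 subn0 !mul1r.
- rewrite subSS.
  have [hjm|hjm] := ltnP j m.
    have h1 := IH j (ltnW hjm).
    have h2 := IH j.+1 hjm.
    have e : (m - j = (m - j.+1).+1)%N by lia.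
    have eP1 : P j.+1 = P j * (1 - 'X^(j.+1)) := PS j.
    have eP2 : P (m - j) = P (m - j.+1) * (1 - 'X^(m - j)).
      by rewrite {1}e PS -e.
    have -> : ('X^(m - j) * G m j + G m j.+1) * P j.+1 * P (m - j)
       = 'X^(m - j) * (1 - 'X^(j.+1)) * (G m j * P j * P (m - j))
         + (1 - 'X^(m - j)) * (G m j.+1 * P j.+1 * P (m - j.+1)).
      by rewrite eP1 eP2; ring.
    rewrite h1 h2 PS.
    have <- : 'X^(m - j) * 'X^(j.+1) = 'X^(m.+1) :> {poly rat}.
      by rewrite -exprD; congr (_ ^+ _); lia.
    ring.
  have ejm : j = m by apply/eqP; rewrite eqn_leq hjm -ltnS h.
  subst j; rewrite (G_gt (ltnSn m)) addr0.
  have h1 := IH m (leqnn m); rewrite subnn P0 mulr1 in h1.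
  by rewrite subnn expr0 mul1r P0 mulr1 PS -{2}h1; ring.
Qed.

Lemma sum_recl (F : nat -> {poly rat}) n :
  \sum_(i < n.+1) F i = F 0%N + \sum_(i < n) F i.+1.
Proof. by rewrite big_ord_recl; congr (_ + _); apply: eq_bigr => i _; rewrite lift0. Qed.
Lemma sum_recr (F : nat -> {poly rat}) n :
  \sum_(i < n.+1) F i = \sum_(i < n) F i + F n.
Proof. by rewrite big_ord_recr. Qed.

Lemma qbin m : \sum_(j < m.+1) 'X^('C(j.+1, 2)) * G m j = E m.
Proof.
elim: m => [|m IH]; first by rewrite big_ord1 /= mulr1 E0.
have S2 : 1 + \sum_(i < m.+1) 'X^('C(i.+2, 2)) * G m i.+1 = E m.
  rewrite -IH (sum_recl (fun i => 'X^('C(i.+1, 2)) * G m i)).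
  have -> : G m 0 = 1 by case: m {IH}.
  rewrite bin_small // expr0 mulr1; congr (_ + _).
  by rewrite (sum_recr (fun i => 'X^('C(i.+2, 2)) * G m i.+1)) (G_gt (ltnSn m)) mulr0 addr0.
have S1 : \sum_(i < m.+1) 'X^('C(i.+2, 2)) * ('X^(m - i) * G m i) = 'X^(m.+1) * E m.
  rewrite -IH mulr_sumr; apply: eq_bigr => i _.
  rewrite !mulrA -!exprD; congr (_ ^+ _ * _).
  rewrite !binS bin1 bin0; have := ltn_ord i; lia.
rewrite (sum_recl (fun j => 'X^('C(j.+1, 2)) * G m.+1 j)).
simpl G.
under eq_bigr => i _ do rewrite mulrDr.
rewrite big_split /= S1 ES -S2 bin_small // expr0 mulr1; ring.
Qed.

Lemma qpochE m : qpoch m = fps_of_poly (P m).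
Proof. by []. Qed.

Lemma gaussE m j : (j <= m)%N -> gauss m j = fps_of_poly (G m j).
Proof.
move=> h; rewrite /gauss h !qpochE (fmul_poly (P j)) -{1}(G_prod h) -mulrA.
rewrite -(fmul_poly (G m j) (P j * P (m - j))) fmulA fmul_finv.
  by rewrite (fmulC (fps_of_poly (G m j))) fmul1.
by rewrite /fps_of_poly coef0M !P_coef0 mul1r oner_neq0.
Qed.

Lemma inner_sumE m : inner_sum m = fps_of_poly (E m).
Proof.
apply: functional_extensionality => k.
rewrite /inner_sum -qbin /fps_of_poly coef_sum; apply: eq_bigr => j _.
rewrite gaussE; last by rewrite -ltnS.
by rewrite qmonoE (fmul_poly 'X^_ (G m j)).
Qed.

Lemma rhs_termE m : rhs_term m =
  fmul (finv (fps_of_poly (P m))) (fps_of_poly ('X^('C(m.+1, 2)) * E m)).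
Proof.
rewrite /rhs_term inner_sumE qmonoE -qpochE -(fmul_poly 'X^('C(m.+1, 2))).
by rewrite fmulC fmulA (fmulC (fps_of_poly (E m))).
Qed.

Local Open Scope ring_scope.

Definition D m : fps := fun n => (cnt n m)%:R.

Lemma fmul_Xn k f n : fmul (fps_of_poly 'X^k) f n = if (k <= n)%N then f (n - k)%N else 0.
Proof.
rewrite /fmul /fps_of_poly; case: leqP => h.
  have h' : (k < n.+1)%N by rewrite ltnS.
  rewrite (bigD1 (Ordinal h')) //= coefXn eqxx mul1r big1 ?addr0 // => i.
  by rewrite -val_eqE /= coefXn => /negbTE ->; rewrite mul0r.
apply: big1 => i _; rewrite coefXn; case: eqP => [e|_]; last by rewrite mul0r.
have := ltn_ord i; lia.
Qed.

Lemma fmul_polyD p r f n :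
  fmul (fps_of_poly (p + r)) f n = fmul (fps_of_poly p) f n + fmul (fps_of_poly r) f n.
Proof.
by rewrite /fmul /fps_of_poly -big_split; apply: eq_bigr => i _; rewrite coefD mulrDl.
Qed.

Lemma fmul_polyB p r f n :
  fmul (fps_of_poly (p - r)) f n = fmul (fps_of_poly p) f n - fmul (fps_of_poly r) f n.
Proof.
by rewrite /fmul /fps_of_poly -sumrB; apply: eq_bigr => i _; rewrite coefB mulrBl.
Qed.

Lemma D_rec m : fmul (fps_of_poly (1 - 'X^(m.+1))) (D m.+1)
  = fmul (fps_of_poly ('X^(m.+1) + 'X^(2 * m.+1))) (D m).
Proof.
apply: functional_extensionality => n.
rewrite fmul_polyB fmul_polyD -(expr0 'X) !fmul_Xn subn0 /D cntS leq0n.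
case: (leqP m.+1 n) => h1; case: (leqP (2 * m.+1) n) => h2 //; rewrite ?natrD ?addr0 ?subr0.
- by ring.
- by ring.
- lia.
Qed.

Lemma D_main m : fmul (fps_of_poly (P m)) (D m) = fps_of_poly ('X^('C(m.+1, 2)) * E m).
Proof.
elim: m => [|m IH].
  rewrite P0 E0 bin_small // expr0 mulr1; apply: functional_extensionality => n.
  rewrite -(expr0 'X) fmul_Xn subn0 /D cnt0 /fps_of_poly coefXn; by [].
rewrite PS -fmul_poly fmulA D_rec fmulC fmulA (fmulC (D m)) IH fmul_poly.
congr fps_of_poly; rewrite ES.
have -> : 'C(m.+2, 2) = ('C(m.+1, 2) + m.+1)%N by rewrite binS bin1 addnC.
rewrite !exprD.
have -> : 'X^(2 * m.+1) = 'X^(m.+1) * 'X^(m.+1) :> {poly rat} by rewrite -exprD; congr (_ ^+ _); lia.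
ring.
Qed.

Lemma D_rhs m : D m = rhs_term m.
Proof.
rewrite rhs_termE; apply: finv_uniq; last exact: D_main.
by rewrite /fps_of_poly P_coef0 oner_neq0.
Qed.

Fixpoint catR (n k : nat) : seq (seq part) :=
  match k with
  | 0 => R n.+1 n 0
  | k'.+1 => R n.+1 n k'.+1 ++ catR n k'
  end.

Lemma catR_spec n k : uniq (catR n k) /\
  forall r, (r \in catR n k) = [&& ok r, weight r == n & (size r <= k)%N].
Proof.
elim: k => [|k [u IH]] /=.
  have [u h] := R_spec 0 (ltnSn n); split => // r; by rewrite h /spec leqn0.
have [u1 h1] := R_spec k.+1 (ltnSn n).
split.
  apply: uniq_cat_disj => // x; rewrite h1 IH /spec => /and3P [_ _ /eqP e] /and3P [_ _].
  by rewrite e ltnn.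
move=> r; rewrite mem_cat h1 IH /spec.
case: (ok r) => //=; case: (weight r == n) => //=.
by rewrite (leq_eqVlt (size r) k.+1) ltnS.
Qed.

Lemma size_catR n k : size (catR n k) = (\sum_(m < k.+1) cnt n m)%N.
Proof.
elim: k => [|k IH] /=; first by rewrite big_ord1.
by rewrite size_cat IH [in RHS]big_ord_recr addnC.
Qed.

Theorem mainTheorem19 (n : nat) :
  exists s : seq (seq part),
    [/\ uniq s,
        forall pi : seq part, (pi \in s) = inC1 pi && (weight pi == n)
      & (size s)%:R = rhs_coef n].
Proof.
have [u h] := catR_spec n n.
exists (map rev (catR n n)); split.
- by rewrite map_inj_uniq //; exact: (can_inj (@revK _)).
- move=> pi; rewrite -{1}(revK pi) mem_map; last exact: (can_inj (@revK _)).
  rewrite h ok_rev.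
  have -> : weight (rev pi) = weight pi by rewrite /weight map_rev sumn_rev.
  case h1 : (inC1 pi) => //=; case: eqP => //= e.
  by rewrite -ok_rev in h1; have := ok_size_weight h1; rewrite size_rev -e /weight map_rev sumn_rev.
- rewrite size_map size_catR natr_sum /rhs_coef; apply: eq_bigr => m _.
  by rewrite -D_rhs.
Qed.
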